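(* Let $n\ge 0$ and $-1\le i,j\le n$ be integers, and let $p\in\Gamma_n$ be written as a concatenation $p=c\,q_2\,b\,q_1\,a$ of paths with $q_1\in\Gamma_i$ and $q_2\in\Gamma_j$. Then $i+j\le n-1$.
   Context: Let $\Bbbk$ be a field, $Q=(Q_0,Q_1,s,t)$ a finite quiver, and $A=\Bbbk Q/I$ a finite-dimensional monomial algebra, i.e. $I$ is an ideal generated by paths of length at least $2$. Paths are written from right to left: a path is $p=\alpha_n\cdots\alpha_1$ with arrows $\alpha_i$ and $t(\alpha_i)=s(\alpha_{i+1})$; vertices are the paths of length $0$; $qp$ denotes concatenation when $t(p)=s(q)$. Let $\mathcal B$ be the set of paths not lying in $I$. A suffix of a path $p$ is a path $q$ with $p=qa$; a prefix is a path $q$ with $p=bq$; proper means $q\ne p$. For $n\ge -1$, a left $n$-ambiguity is a path $p$ with a decomposition $p=u_{-1}u_0u_1\cdots u_n$ such that $u_{-1}\in Q_0$, $u_0\in Q_1$, $u_i\in\mathcal B$ for all $i$, and for every $0\le i\le n-1$, $u_iu_{i+1}\in I$ while no proper suffix of $u_iu_{i+1}$ lies in $I$. A right $n$-ambiguity is a path with a decomposition $p=v_n\cdots v_0v_{-1}$ with $v_{-1}\in Q_0$, $v_0\in Q_1$, $v_i\in\mathcal B$, and for $0\le i\le n-1$, $v_{i+1}v_i\in I$ while no proper prefix of $v_{i+1}v_i$ lies in $I$. A path is a left $n$-ambiguity iff it is a right $n$-ambiguity; such paths are called $n$-ambiguities, and $\Gamma_n$ denotes their set. *)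

(* Defs.v *)
From mathcomp Require Import all_boot all_order all_algebra.
Set Implicit Arguments. Unset Strict Implicit. Unset Printing Implicit Defensive.

(* A path alpha_n ... alpha_1
   (written right to left, alpha_1 traversed first) is stored as its source
   vertex together with the list [:: alpha_1; ...; alpha_n] of its arrows in
   order of traversal.  Vertices are the paths with no arrows. *)
Record qpath (V E : Type) := QPath { src : V; arrs : seq E }.

Section Quiver.
Context {V E : finType} (s t : E -> V).

Definition qlen (p : qpath V E) : nat := size (arrs p).

Definition tgt (p : qpath V E) : V := last (src p) (map t (arrs p)).

Definition valid (p : qpath V E) : bool :=
  match arrs p with
  | [::] => true
  | a :: l => (s a == src p) && path (fun x y => t x == s y) a l
  end.

(* qcomp q p  is the concatenation  q p  (p first, then q); it is meant to be
   used only when t(p) = s(q). *)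
Definition qcomp (q p : qpath V E) : qpath V E :=
  QPath (src p) (arrs p ++ arrs q).

Definition composable (q p : qpath V E) : bool := tgt p == src q.

(* The monomial ideal I generated by a set R of paths (of length >= 2):
   a path lies in I iff it is of the form  b r a  with r in R. *)
Variable R : qpath V E -> Prop.

Definition inI (p : qpath V E) : Prop :=
  exists r a b, R r /\ valid a /\ valid b /\ composable r a /\
                composable b r /\ p = qcomp b (qcomp r a).

Definition inB (p : qpath V E) : Prop := valid p /\ ~ inI p.

Definition proper_suffix (q p : qpath V E) : Prop :=
  q <> p /\ exists a, valid a /\ valid q /\ composable q a /\ p = qcomp q a.

Definition proper_prefix (q p : qpath V E) : Prop :=
  q <> p /\ exists b, valid b /\ valid q /\ composable b q /\ p = qcomp b q.

Fixpoint prodL (e : qpath V E) (us : seq (qpath V E)) : qpath V E :=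
  match us with
  | [::] => e
  | u :: us' => qcomp e (prodL u us')
  end.

Fixpoint chainL (e : qpath V E) (us : seq (qpath V E)) : bool :=
  match us with
  | [::] => true
  | u :: us' => composable e (prodL u us') && chainL u us'
  end.

Fixpoint prodR (e : qpath V E) (vs : seq (qpath V E)) : qpath V E :=
  match vs with
  | [::] => e
  | v :: vs' => prodR (qcomp v e) vs'
  end.

Fixpoint chainR (e : qpath V E) (vs : seq (qpath V E)) : bool :=
  match vs with
  | [::] => true
  | v :: vs' => composable v e && chainR (qcomp v e) vs'
  end.


(* Left (N-1)-ambiguity: p = u_{-1} u_0 u_1 ... u_{N-1}, where
   e = u_{-1} and us = [:: u_0; ...; u_{N-1}]. *)
Definition leftAmb (N : nat) (p : qpath V E) : Prop :=
  exists (e : qpath V E) (us : seq (qpath V E)),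
    size us = N /\ chainL e us /\ p = prodL e us /\
    valid e /\ qlen e = 0 /\
    (0 < N -> qlen (nth e us 0) = 1) /\
    (forall k, k < N -> inB (nth e us k)) /\
    (forall k, k.+1 < N ->
       inI (qcomp (nth e us k) (nth e us k.+1)) /\
       forall q, proper_suffix q (qcomp (nth e us k) (nth e us k.+1)) -> ~ inI q).

(* Right (N-1)-ambiguity: p = v_{N-1} ... v_0 v_{-1}, where
   e = v_{-1} and vs = [:: v_0; ...; v_{N-1}]. *)
Definition rightAmb (N : nat) (p : qpath V E) : Prop :=
  exists (e : qpath V E) (vs : seq (qpath V E)),
    size vs = N /\ chainR e vs /\ p = prodR e vs /\
    valid e /\ qlen e = 0 /\
    (0 < N -> qlen (nth e vs 0) = 1) /\
    (forall k, k < N -> inB (nth e vs k)) /\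
    (forall k, k.+1 < N ->
       inI (qcomp (nth e vs k.+1) (nth e vs k)) /\
       forall q, proper_prefix q (qcomp (nth e vs k.+1) (nth e vs k)) -> ~ inI q).

(* Gamma_n (n >= -1, an integer): the n-ambiguities, i.e. paths that are both
   left and right n-ambiguities (the two notions coincide). *)
Definition Gamma (n : int) (p : qpath V E) : Prop :=
  exists N : nat, n = (N%:Z - 1)%R /\ leftAmb N p /\ rightAmb N p.

(* Standing hypotheses: A = kQ/I is a finite-dimensional monomial algebra,
   I generated by (valid) paths of length >= 2. *)
Definition monomial_fd : Prop :=
  (forall r, R r -> valid r /\ 2 <= qlen r) /\
  (exists M : nat, forall p, valid p -> M <= qlen p -> inI p).

End Quiver.

(* Main.v *)
Require Import Defs.
From mathcomp Require Import all_boot all_order all_algebra.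
From mathcomp Require Import zify.
Set Implicit Arguments. Unset Strict Implicit. Unset Printing Implicit Defensive.

Section Aux.
Context {V E : finType} (s t : E -> V) (R : qpath V E -> Prop).

Lemma valid_cat v l1 l2 : valid s t (QPath v (l1 ++ l2)) =
  valid s t (QPath v l1) && valid s t (QPath (last v (map t l1)) l2).
Proof.
case: l1 => [|a l1] /=; first by rewrite /valid /=.
rewrite /valid /= cat_path -andbA last_map; congr (_ && (_ && _)).
by case: l2 => [|c l2] //=; rewrite eq_sym.
Qed.

Definition vx (X : qpath V E) k := last (src X) (map t (take k (arrs X))).
Definition sub (X : qpath V E) x y := QPath (vx X x) (drop x (take y (arrs X))).

Lemma vx_cat (X : qpath V E) x y : x <= y ->
  vx X y = last (vx X x) (map t (drop x (take y (arrs X)))).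
Proof.
move=> le; rewrite /vx -last_cat -map_cat.
by rewrite -{1}(cat_take_drop x (take y (arrs X))) take_takel.
Qed.

Lemma valid_sub X x y : valid s t X -> x <= y -> valid s t (sub X x y).
Proof.
move=> vX le; case: X vX => v l vX; rewrite /sub /=.
have: valid s t (QPath v (take y l)).
  by move: vX; rewrite -{1}(cat_take_drop y l) valid_cat => /andP[].
rewrite -{1}(cat_take_drop x (take y l)) valid_cat take_takel //.
by case/andP.
Qed.

Lemma tgt_sub X x y : x <= y -> y <= size (arrs X) -> tgt t (sub X x y) = vx X y.
Proof. by move=> le _; rewrite /tgt /= (vx_cat X le). Qed.

Lemma qcomp_sub X x y z : x <= y -> y <= z ->
  qcomp (sub X y z) (sub X x y) = sub X x z.
Proof.
move=> le1 le2; rewrite /qcomp /sub /=; congr QPath.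
rewrite -[RHS](cat_take_drop (y - x)) take_drop.
rewrite subnK // take_takel; last by [].
by rewrite drop_drop subnK.
Qed.

Lemma sub_full X : sub X 0 (size (arrs X)) = X.
Proof. by case: X => v l; rewrite /sub /vx /= take0 drop0 take_size. Qed.

Lemma valid_head X k e0 : valid s t X -> k < size (arrs X) ->
  s (nth e0 (arrs X) k) = vx X k.
Proof.
case: X => v l vX lt; rewrite /vx /=.
move: vX; rewrite -{1}(cat_take_drop k l) valid_cat => /andP[_].
by rewrite (drop_nth e0 lt) /valid /= => /andP[/eqP].
Qed.

Lemma r_sub X r x y : valid s t X -> valid s t r -> 0 < size (arrs r) ->
  arrs r = drop x (take y (arrs X)) -> y <= size (arrs X) -> r = sub X x y.
Proof.
case: r => v l vX vr; rewrite /= => sz ea ley; rewrite /sub -ea; congr QPath.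
move: vr sz; case: l ea => [|a l] ea //; rewrite /valid /= => /andP[/eqP <- _] _.
have lt : x < size (arrs X).
  have: 0 < size (drop x (take y (arrs X))) by rewrite -ea.
  rewrite size_drop size_take; case: ifP; lia.
rewrite -(valid_head a vX lt).
have : nth a (drop x (take y (arrs X))) 0 = a by rewrite -ea.
rewrite nth_drop addn0 nth_take //.
  by move ->.
have: 0 < size (drop x (take y (arrs X))) by rewrite -ea.
rewrite size_drop size_take; case: ifP; lia.
Qed.

Lemma inI_sub X x y x' y' r : valid s t X -> x <= x' -> x' <= y' -> y' <= y ->
  y <= size (arrs X) -> R r -> valid s t r -> 0 < size (arrs r) ->
  arrs r = drop x' (take y' (arrs X)) -> inI s t R (sub X x y).
Proof.
move=> vX h1 h2 h3 h4 Rr vr sz ea.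
have er := r_sub vX vr sz ea (leq_trans h3 h4).
exists r, (sub X x x'), (sub X y' y); split=> //.
split; first exact: valid_sub.
split; first exact: valid_sub.
split; first by rewrite /composable tgt_sub // ?er //; lia.
split; first by rewrite /composable er tgt_sub //; lia.
by rewrite er !qcomp_sub //; lia.
Qed.

Lemma tgt_qcomp (q p : qpath V E) : composable t q p -> tgt t (qcomp q p) = tgt t q.
Proof.
rewrite /composable /tgt /qcomp /= => /eqP e.
by rewrite map_cat last_cat e.
Qed.

Lemma valid_qcomp (q p : qpath V E) : composable t q p -> valid s t q -> valid s t p ->
  valid s t (qcomp q p).
Proof.
rewrite /composable => /eqP e vq vp; case: p vp e => v l vp /= e.
rewrite /qcomp /= valid_cat vp /=.
move: e; rewrite /tgt /= => ->.
by case: q vq.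
Qed.

Hypothesis hR1 : forall r, R r -> valid s t r /\ 2 <= qlen r.

Definition RelP (P : qpath V E) x y := exists r, R r /\ y <= size (arrs P) /\
   arrs r = drop x (take y (arrs P)).

Lemma size_dt (l : seq E) x y : y <= size l -> size (drop x (take y l)) = y - x.
Proof. move=> h; rewrite size_drop size_take; case: ifP; lia. Qed.

Lemma Rel_lt r (l : seq E) x y : R r -> arrs r = drop x (take y l) -> y <= size l -> x + 2 <= y.
Proof.
move=> /hR1 [_]; rewrite /qlen => h e le.
by move: h; rewrite e size_dt //; lia.
Qed.

Lemma RelP_lt P x y : RelP P x y -> x + 2 <= y.
Proof. by case=> r [Rr [le e]]; apply: (Rel_lt Rr e le). Qed.

Lemma minX X r x y : valid s t X ->
  (forall q, proper_suffix s t q X -> ~ inI s t R q) -> R r ->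
  arrs r = drop x (take y (arrs X)) -> y <= size (arrs X) -> x = 0.
Proof.
move=> vX hm Rr e le; have lt := Rel_lt Rr e le.
case: (posnP x) => // xp; exfalso.
have [vr sr] := hR1 Rr.
apply: (hm (sub X x (size (arrs X)))).
  split.
    move=> eq; have : size (arrs (sub X x (size (arrs X)))) = size (arrs X) by rewrite eq.
    rewrite /sub /= size_dt //; lia.
  exists (sub X 0 x); split; first by apply: valid_sub.
  split; first by apply: valid_sub; lia.
  split; first by rewrite /composable tgt_sub //; lia.
  by rewrite qcomp_sub // ?sub_full //; lia.
apply: (inI_sub (x' := x) (y' := y) (r := r)) => //; try lia.
by move: sr; rewrite /qlen; lia.
Qed.

Lemma pieceX X r x y : valid s t X -> ~ inI s t R X -> R r ->
  arrs r = drop x (take y (arrs X)) -> y <= size (arrs X) -> False.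
Proof.
move=> vX hm Rr e le; have lt := Rel_lt Rr e le.
have [vr sr] := hR1 Rr.
apply: hm; rewrite -(sub_full X).
apply: (inI_sub (x' := x) (y' := y) (r := r)) => //; try lia.
by move: sr; rewrite /qlen; lia.
Qed.

Lemma loc_out (w : seq E) (X : qpath V E) lo hi x y (l : seq E) :
  arrs X = drop lo (take hi w) -> lo <= hi -> hi <= size w -> y <= size (arrs X) ->
  l = drop x (take y (arrs X)) -> l = drop (lo + x) (take (lo + y) w) /\ lo + y <= hi.
Proof.
move=> eX hlo hw hy ->; have sX : size (arrs X) = hi - lo by rewrite eX size_dt.
rewrite eX take_drop take_takel; last lia.
by rewrite drop_drop; split; [rewrite (addnC x) (addnC y) | lia].
Qed.

Lemma loc_in (w : seq E) (X : qpath V E) lo hi x y :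
  arrs X = drop lo (take hi w) -> hi <= size w -> lo <= x -> x <= y -> y <= hi ->
  drop x (take y w) = drop (x - lo) (take (y - lo) (arrs X)) /\ y - lo <= size (arrs X).
Proof.
move=> eX hw h1 h2 h3; have sX : size (arrs X) = hi - lo by rewrite eX size_dt.
split; last lia.
rewrite eX take_drop take_takel; last lia.
by rewrite drop_drop (subnK h1) (subnK (leq_trans h1 h2)).
Qed.

Definition W (us : seq (qpath V E)) : seq E := flatten (rev (map (@arrs V E) us)).

Lemma W_cat l1 l2 : W (l1 ++ l2) = W l2 ++ W l1.
Proof. by rewrite /W map_cat rev_cat flatten_cat. Qed.

Lemma W_cons u l : W (u :: l) = W l ++ arrs u.
Proof. by rewrite -cat1s W_cat /W /= cats0. Qed.

Lemma arrs_prodL e us : arrs (prodL e us) = W us ++ arrs e.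
Proof.
elim: us e => [|u us IH] e //=.
by rewrite IH W_cons -catA.
Qed.

Lemma tgt_prodL u us : chainL t u us -> tgt t (prodL u us) = tgt t u.
Proof. by case: us => [|v us] //= /andP[c _]; apply: tgt_qcomp. Qed.

Lemma chainL_comp e us m : chainL t e us -> m < size us ->
  composable t (nth e (e :: us) m) (nth e us m).
Proof.
elim: us e m => [|u us IH] e m //= /andP[c ch] lt.
case: m lt => [|m] lt /=.
  by move: c; rewrite /composable tgt_prodL.
have := IH u m ch lt.
have lt1 : m < size us by []. have lt2 : m < size (u :: us) by rewrite /=; lia.
by rewrite (set_nth_default e u lt1) (set_nth_default e u lt2).
Qed.

Lemma mid (l1 l2 l3 : seq E) :
  drop (size l1) (take (size l1 + size l2) (l1 ++ l2 ++ l3)) = l2.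
Proof.
by rewrite takeD (@take_size_cat _ _ l1) // (@drop_size_cat _ _ l1) // (@drop_size_cat _ _ l1) // (@take_size_cat _ _ l2).
Qed.

Lemma Wdrop_le (l : seq (qpath V E)) k : size (W (drop k l)) <= size (W l).
Proof. by rewrite -{2}(cat_take_drop k l) W_cat size_cat leq_addr. Qed.

Lemma chain N P : leftAmb s t R N P -> exists A : nat -> nat,
 A 0 = size (arrs P) /\ A N = 0 /\ (0 < N -> A 1 + 1 = A 0) /\
   (forall m, A m <= A 0) /\
   (forall m, m + 2 <= N -> exists y, RelP P (A (m + 2)) y /\ y <= A m) /\
   (forall m x y, m + 2 <= N -> RelP P x y -> A (m + 2) < x -> y <= A m -> False) /\
   (forall m x y, m + 1 <= N -> RelP P x y -> A (m + 1) <= x -> y <= A m -> False).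
Proof.
case=> e [us [sz [ch [eP [ve [le [h0 [hB hI]]]]]]]].
have ew : arrs P = W us.
  by rewrite eP arrs_prodL; move: le; rewrite /qlen => /size0nil ->; rewrite cats0.
pose A m := size (W (drop m us)).
have F1 m : take (A m) (W us) = W (drop m us).
  by rewrite -{1}(cat_take_drop m us) W_cat (@take_size_cat _ _ (W (drop m us))).
have Fs m : m < N -> W (drop m us) = W (drop m.+1 us) ++ arrs (nth e us m).
  by move=> lt; rewrite (drop_nth e) ?sz // W_cons.
have A0 : A 0 = size (W us) by rewrite /A drop0.
have Amon m : A m <= A 0 by rewrite A0; apply: Wdrop_le.
have Ale m k : m <= k -> A k <= A m.
  by move=> le'; rewrite /A -(subnK le') -drop_drop; apply: Wdrop_le.
have F2 m : m < N -> drop (A m.+1) (take (A m) (W us)) = arrs (nth e us m).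
  by move=> lt; rewrite F1 Fs // (@drop_size_cat _ _ (W (drop m.+1 us))).
have F3 m : m.+1 < N -> drop (A m.+2) (take (A m) (W us)) =
    arrs (qcomp (nth e us m) (nth e us m.+1)).
  move=> lt; rewrite F1 Fs; last lia.
  rewrite Fs // -catA (@drop_size_cat _ _ (W (drop m.+2 us))) //.
have vP m : m < N -> valid s t (nth e us m) by move=> lt; case: (hB m lt).
have vX m : m.+1 < N -> valid s t (qcomp (nth e us m) (nth e us m.+1)).
  move=> lt; apply: valid_qcomp; [|apply: vP; lia|by apply: vP].
  have lt' : m.+1 < size us by rewrite sz.
  by have := chainL_comp ch lt'.
exists A; split; first by rewrite A0 ew.
split; first
  by rewrite /A drop_oversize ?sz.
split.
  move=> N0; rewrite /A (Fs 0 N0) size_cat; have := h0 N0; rewrite /qlen => ->; lia.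
split; first by [].
split.
  move=> m lm; have lt : m.+1 < N by lia.
  have [iX mX] := hI m lt.
  case: iX => r [a' [b' [Rr [va' [vb' [ca [cb eX]]]]]]].
  have ea : arrs r = drop (size (arrs a')) (take (size (arrs a') + size (arrs r))
            (arrs (qcomp (nth e us m) (nth e us m.+1)))).
    by rewrite eX /qcomp /= -catA mid.
  have hy : size (arrs a') + size (arrs r) <= size (arrs (qcomp (nth e us m) (nth e us m.+1))).
    by rewrite eX /qcomp /= !size_cat; lia.
  have a0 := minX (vX m lt) mX Rr ea hy.
  have l2 : m <= m.+2 by lia.
  have hw : A m <= size (W us) by rewrite -A0.
  have [e1 e2] := loc_out (esym (F3 m lt)) (Ale m m.+2 l2) hw hy ea.
  rewrite addn2; exists (A m.+2 + (size (arrs a') + size (arrs r))); split; last exact: e2.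
  exists r; split => //; split; first by rewrite ew -A0; apply: leq_trans e2 (Amon m).
  by rewrite ew {1}e1 a0 addn0.
split.
  move=> m x y lm Rxy lx ly.
  have xy : x <= y by have := RelP_lt Rxy; lia.
  case: Rxy => r [Rr [hy er]].
  rewrite addn2 in lm lx.
  have lt : m.+1 < N by lia.
  have [_ mX] := hI m lt.
  have hw : A m <= size (W us) by rewrite -A0.
  rewrite ew in er.
  have [e' hy'] := loc_in (esym (F3 m lt)) hw (ltnW lx) xy ly.
  rewrite e' in er.
  have := minX (vX m lt) mX Rr er hy'; lia.
move=> m x y lm Rxy lx ly.
have xy : x <= y by have := RelP_lt Rxy; lia.
case: Rxy => r [Rr [hy er]].
rewrite addn1 in lm lx.
have [vm nI] := hB m lm.
have hw : A m <= size (W us) by rewrite -A0.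
rewrite ew in er.
have [e' hy'] := loc_in (esym (F2 m lm)) hw lx xy ly.
rewrite e' in er.
exact: (pieceX vm nI Rr er hy').
Qed.
End Aux.


Section Core.
Variables (Rel : nat -> nat -> Prop) (N : nat) (A : nat -> nat).
Hypothesis Rlt : forall x y, Rel x y -> x < y.
Hypothesis AN : A N = 0.
Hypothesis Amin : forall m x y, m + 2 <= N -> Rel x y -> A (m+2) < x -> y <= A m -> False.
Hypothesis Apiece : forall m x y, m + 1 <= N -> Rel x y -> A (m+1) <= x -> y <= A m -> False.

Lemma step1 D Nd (Dst : forall b, b + 2 <= Nd -> exists y, Rel (D (b+2)) y /\ y <= D b) a b :
  D b <= A a -> a <= N -> b + 2 <= Nd -> a + 2 <= N /\ D (b+2) <= A (a+2).
Proof.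
move=> hDA ha hb; have [y [Ry hy]] := Dst b hb.
have xy := Rlt Ry.
case: (leqP (a+2) N) => h.
  split=> //; rewrite leqNgt; apply/negP => lt.
  by apply: (Amin h Ry lt); apply: leq_trans hDA.
exfalso.
have [ea|ea] : a = N \/ a + 1 = N by lia.
  by move: hy hDA; rewrite ea AN; lia.
apply: (@Apiece a _ _ _ Ry) => //; first by rewrite ea.
  by rewrite ea AN.
by apply: leq_trans hDA.
Qed.

Lemma iterD D Nd (Dst : forall b, b + 2 <= Nd -> exists y, Rel (D (b+2)) y /\ y <= D b) k :
  forall a b, D b <= A a -> a <= N -> b + 2 * k <= Nd -> a + 2 * k <= N /\ D (b + 2 * k) <= A (a + 2 * k).
Proof.
elim: k => [|k IH] a b h1 h2 h3; first by rewrite !muln0 !addn0.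
have hb2 : b + 2 <= Nd by lia.
have [h4 h5] := step1 Dst h1 h2 hb2.
have hb3 : b + 2 + 2 * k <= Nd by lia.
have := IH (a + 2) (b + 2) h5 h4 hb3; rewrite -!addnA.
by have -> : 2 + 2 * k = 2 * k.+1 by lia.
Qed.

Lemma core Ni Nj B C :
  0 < N ->
  (forall b, b + 2 <= Ni -> exists y, Rel (B (b+2)) y /\ y <= B b) ->
  (forall b, b + 2 <= Nj -> exists y, Rel (C (b+2)) y /\ y <= C b) ->
  C 0 <= A 0 -> (0 < Nj -> C 1 <= A 1) -> B 0 <= C Nj ->
  (0 < Ni -> B Ni < B Ni.-1) -> Ni + Nj <= N.
Proof.
move=> N0 Bst Cst h0 h1 hBC hpos.
have eNj := odd_double_half Nj.
have [hNj hCA] : Nj <= N /\ C Nj <= A Nj.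
  have := @iterD C Nj Cst (Nj./2) (odd Nj) (odd Nj).
  rewrite -muln2 mulnC in eNj; rewrite eNj.
  apply.
  - by case: (odd Nj) eNj => //= e; apply: h1; lia.
  - by case: (odd Nj) => /=; lia.
  - by lia.
have eNi := odd_double_half Ni.
rewrite -muln2 mulnC in eNi.
have hh : 0 + 2 * Ni./2 <= Ni by lia.
have [g1 g2] := @iterD B Ni Bst (Ni./2) Nj 0 (leq_trans hBC hCA) hNj hh.
case oi: (odd Ni) eNi => /= eNi; first last.
  by rewrite -eNi add0n in g1 *; lia.
case: (ltnP (Nj + 2 * Ni./2) N) => hl; first by lia.
have eq : Nj + 2 * Ni./2 = N by lia.
rewrite eq AN add0n in g2.
have hN : 0 < Ni by lia.
have := hpos hN.
have e2 : Ni.-1 = 2 * Ni./2 by lia.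
rewrite e2; lia.
Qed.
End Core.

Section Fin.
Context {V E : finType} (s t : E -> V) (R : qpath V E -> Prop).
Hypothesis hR1 : forall r, R r -> valid s t r /\ 2 <= qlen r.

Lemma posA N (P : qpath V E) (A : nat -> nat) :
  (0 < N -> A 1 + 1 = A 0) ->
  (forall m, m + 2 <= N -> exists y, RelP R P (A (m + 2)) y /\ y <= A m) ->
  (forall m x y, m + 1 <= N -> RelP R P x y -> A (m + 1) <= x -> y <= A m -> False) ->
  0 < N -> A N < A N.-1.
Proof.
move=> h1 hst hpc N0.
case: N N0 h1 hst hpc => [|[|m]] //= _ h1 hst hpc; first by have := h1 isT; lia.
have hm : (m + 2 <= m.+2)%N by rewrite addn2.
have [y [Ry hy]] := hst m hm.
rewrite ltnNge; apply/negP => le.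
apply: (hpc m (A m.+2) y _ _ _ hy); first by lia.
  by rewrite addn2 in Ry.
by rewrite addn1.
Qed.

Lemma shiftRel (X P : qpath V E) lo x y :
  arrs X = drop lo (take (lo + size (arrs X)) (arrs P)) ->
  lo + size (arrs X) <= size (arrs P) ->
  RelP R X x y -> RelP R P (lo + x) (lo + y).
Proof.
move=> eX hw [r [Rr [hy er]]].
have [e1 e2] := loc_out eX (leq_addr _ _) hw hy er.
exists r; split => //; split => //; exact: leq_trans e2 hw.
Qed.
End Fin.

Local Open Scope ring_scope.

Theorem mainTheorem11 (V E : finType) (s t : E -> V) (R : qpath V E -> Prop)
  (hR : monomial_fd s t R) (n : nat) (i j : int)
  (hi : -1 <= i <= n%:Z) (hj : -1 <= j <= n%:Z)
  (p a b c q1 q2 : qpath V E)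
  (va : valid s t a) (vb : valid s t b) (vc : valid s t c)
  (vq1 : valid s t q1) (vq2 : valid s t q2)
  (c1 : composable t q1 a) (c2 : composable t b q1) (c3 : composable t q2 b)
  (c4 : composable t c q2)
  (hp : Gamma s t R n%:Z p) (hq1 : Gamma s t R i q1) (hq2 : Gamma s t R j q2)
  (hdec : p = qcomp c (qcomp q2 (qcomp b (qcomp q1 a)))) :
  i + j <= n%:Z - 1.
Proof.
have hR1 : forall r, R r -> valid s t r /\ (2 <= qlen r)%N by case: hR.
case: hp => N [eN [lp _]].
case: hq1 => Ni [ei [l1 _]].
case: hq2 => Nj [ej [l2 _]].
suff H : (Ni + Nj <= N)%N.
  rewrite ei ej; move: eN H; lia.
have [A [A0 [AN [A1 [Amon [Ast [Amin Apc]]]]]]] := chain hR1 lp.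
have [Bq [B0 [BN [B1 [_ [Bst [_ Bpc]]]]]]] := chain hR1 l1.
have [Cq [C0 [CN [C1 [_ [Cst [_ Cpc]]]]]]] := chain hR1 l2.
have N0 : (0 < N)%N by move: eN; lia.
have ew : arrs p = arrs a ++ arrs q1 ++ (arrs b ++ arrs q2 ++ arrs c).
  by rewrite hdec /qcomp /= -!catA.
have ew2 : arrs p = (arrs a ++ arrs q1 ++ arrs b) ++ arrs q2 ++ arrs c.
  by rewrite ew -!catA.
have sp : size (arrs p) = (size (arrs a) + size (arrs q1) + size (arrs b) + size (arrs q2) + size (arrs c))%N.
  by rewrite ew !size_cat; lia.
have e1 : arrs q1 = drop (size (arrs a)) (take (size (arrs a) + size (arrs q1)) (arrs p)).
  by rewrite ew mid.
have e2 : arrs q2 = drop (size (arrs a ++ arrs q1 ++ arrs b))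
     (take (size (arrs a ++ arrs q1 ++ arrs b) + size (arrs q2)) (arrs p)).
  by rewrite ew2 mid.
have w1 : (size (arrs a) + size (arrs q1) <= size (arrs p))%N by lia.
have w2 : (size (arrs a ++ arrs q1 ++ arrs b) + size (arrs q2) <= size (arrs p))%N.
  by rewrite !size_cat; lia.
pose B k := (size (arrs a) + Bq k)%N.
pose C k := (size (arrs a ++ arrs q1 ++ arrs b) + Cq k)%N.
apply: (@core (RelP R p) N A _ AN Amin Apc Ni Nj B C N0).
- by move=> x y H; have := RelP_lt hR1 H; lia.
- move=> k hk; have [y [Ry hy]] := Bst k hk.
  exists (size (arrs a) + y)%N; split; last by rewrite /B leq_add2l.
  exact: (shiftRel e1 w1 Ry).
- move=> k hk; have [y [Ry hy]] := Cst k hk.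
  exists (size (arrs a ++ arrs q1 ++ arrs b) + y)%N; split; last by rewrite /C leq_add2l.
  exact: (shiftRel e2 w2 Ry).
- by rewrite /C C0 A0 !size_cat; lia.
- move=> hN; have := C1 hN; have := A1 N0; rewrite /C C0 A0 !size_cat; lia.
- by rewrite /B /C CN B0 !size_cat; lia.
- move=> hN; rewrite /B ltn_add2l.
  exact: (posA B1 Bst Bpc hN).
Qed.
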